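(* Let $(X,d)$ be a proper metric space and $f:X\to\mathbb R_+=[0,\infty)$ a coarsely proper (not necessarily continuous) function. Then there is a continuous, proper, asymptotically Lipschitz function $q:X\to\mathbb R_+$ with $q\le f$ on $X$.
   Context: A metric space is proper if closed balls are compact. A function is coarsely proper if the preimage of every bounded set is bounded; proper if preimages of compact sets are compact; asymptotically Lipschitz if there are $\lambda,s\ge0$ with $|q(x)-q(x')|\le\lambda d(x,x')+s$. *)

(* Defs.v *)
From HB Require Import structures.
From mathcomp Require Import all_boot all_order all_algebra.
From mathcomp Require Import all_classical all_reals all_analysis.
Set Implicit Arguments. Unset Strict Implicit. Unset Printing Implicit Defensive.
Import Order.TTheory GRing.Theory Num.Theory.
Import numFieldTopology.Exports.
Local Open Scope classical_set_scope.
Local Open Scope ring_scope.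

Definition cball {R : realType} {X : metricType R} (x : X) (r : R) : set X :=
  [set y | mdist x y <= r].

Definition proper_space {R : realType} (X : metricType R) : Prop :=
  forall (x : X) (r : R), compact (cball x r).

Definition mbounded {R : realType} {X : metricType R} (A : set X) : Prop :=
  A = set0 \/ exists (x : X) (r : R), A `<=` cball x r.

Definition rbounded {R : realType} (B : set R) : Prop :=
  exists M : R, forall y, B y -> `|y| <= M.

Definition coarsely_proper {R : realType} {X : metricType R} (f : X -> R) : Prop :=
  forall B : set R, rbounded B -> mbounded (f @^-1` B).

Definition proper_map {R : realType} {X : metricType R} (q : X -> R) : Prop :=
  forall K : set R, compact K -> compact (q @^-1` K).

Definition asymp_lipschitz {R : realType} {X : metricType R} (q : X -> R) : Prop :=
  exists (lam s : R), 0 <= lam /\ 0 <= s /\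
    forall x x' : X, `|q x - q x'| <= lam * mdist x x' + s.

(* Main.v *)
Require Import Defs.
From HB Require Import structures.
From mathcomp Require Import all_boot all_order all_algebra.
From mathcomp Require Import all_classical all_reals all_analysis.
From mathcomp Require Import lra.
Import Order.TTheory GRing.Theory Num.Theory.
Import numFieldTopology.Exports.
Local Open Scope classical_set_scope.
Local Open Scope ring_scope.

Theorem proposition4p5 (R : realType) (X : metricType R) (f : X -> R) :
  proper_space X ->
  (forall x, 0 <= f x) ->
  coarsely_proper f ->
  exists q : X -> R,
    [/\ continuous q, (forall x, 0 <= q x), proper_map q, asymp_lipschitz q
      & forall x, q x <= f x].
Proof.
move=> Hpr f0 Hcp.
pose S (x : X) := [set f y + mdist x y | y in [set: X]].
pose q x := inf (S x).
have Sne x : S x !=set0 by exists (f x + mdist x x); exists x.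
have Slb x : has_lbound (S x).
  exists 0 => _ [y _ <-]; by rewrite addr_ge0 // mdist_ge0.
have qle x y : q x <= f y + mdist x y by apply: ge_inf => //; exists y.
have q0 x : 0 <= q x.
  apply: lb_le_inf => // _ [y _ <-]; by rewrite addr_ge0 // mdist_ge0.
have lip x x' : q x <= q x' + mdist x x'.
  rewrite -lerBlDr; apply: lb_le_inf => // _ [y _ <-].
  rewrite lerBlDr (le_trans (qle x y)) // -addrA lerD2l addrC.
  exact: metric_triangle.
have lipn x x' : `|q x - q x'| <= mdist x x'.
  rewrite ler_norml; have := lip x x'; have := lip x' x.
  rewrite (metric_sym x' x) => h1 h2; apply/andP; split; lra.
have qc : continuous q.
  move=> x; apply/cvgrPdist_lt => e e0; apply/metricType_numDomainType.nbhs_mdistP.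
  exists e => //= y /= dxy.
  by rewrite (le_lt_trans (lipn _ _)).
exists q; split => //.
- move=> K cK.
  have [M [_ HM]] := compact_bounded cK.
  have KM z : K z -> `|z| <= M + 1.
    by move=> Kz; apply: (HM (M + 1)) => //; rewrite ltrDl.
  pose B := f @^-1` [set t : R | `|t| <= M + 2].
  have key x : K (q x) -> exists2 y, B y & mdist x y <= M + 2.
    move=> Kx; have qM : q x < M + 2.
      by have := KM _ Kx; rewrite ler_norml => /andP[_ h]; lra.
    have [_ [y _ <-] lt] := inf_lt (Sne x) qM.
    exists y; rewrite /B /= ?ger0_norm //.
      by have := mdist_ge0 x y; lra.
    by have := f0 y; lra.
  have : rbounded [set t : R | `|t| <= M + 2] by exists (M + 2).
  move=> /Hcp [HB0 | [z0 [r Hr]]].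
    have -> : q @^-1` K = set0.
      apply/seteqP; split => x //= /key [y By _].
      by have : (set0 : set X) y by rewrite -HB0.
    exact: compact0.
  apply: (subclosed_compact _ (Hpr z0 (r + (M + 2)))).
    apply: preimage_closed; first by move=> x _; apply: qc.
    exact: compact_closed (@Rhausdorff R) cK.
  move=> x /key [y /Hr By dxy]; rewrite /cball /=.
  rewrite (le_trans (metric_triangle z0 y x)) // lerD // metric_sym. exact: dxy.
- exists 1; exists 0; do 2 split => //; move=> x x'; rewrite mul1r addr0; exact: lipn.
- move=> x; by rewrite (le_trans (qle x x)) // mdistxx addr0.
Qed.
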